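(* Let $G=\langle V,E_s\rangle$ be an undirected graph with $V=\{1,\dots,n\}$, where edges are treated as bidirected (so $(i,j)\in E_s$ iff $(j,i)\in E_s$, no loops). Let $\mu_{ij}=\mu_{ji}\ge 0$ ($i\neq j$) be requirements, and let $\delta=(\delta_1,\dots,\delta_n)$ be a sequence of positive integers with $\sum_i\delta_i=2(n-1)$ such that $G$ has at least one spanning tree in which every vertex $i$ has degree $\delta_i$ (an admissible tree). Let $m=|\{i:\delta_i>1\}|$, $L=m+2$, and let $M\ge L$ be a constant. For a spanning tree $T$ let $C_A(T)=\sum_{i\neq j}\mu_{ij}d_T(i,j)$, where $d_T(i,j)$ is the number of edges of the path from $i$ to $j$ in $T$; an admissible tree minimizing $C_A$ is called optimal. Consider the mixed-integer linear program (F1L) in variables $x_{ij}=x_{ji}\in\{0,1\}$ for $(i,j)\in E_s$, integer variables $d_{ij}=d_{ji}\in\{1,\dots,L\}$ for $i\neq j\in V$, and $y_{ikj}\in\{0,1\}$ for $i<j$, $(i,k)\in E_s$, $k\neq j$: minimize $\sum_{i,j=1,\,i\neq j}^n\mu_{ij}d_{ij}$ subject to - $d_{ij}\ge d_{kj}+1-M(1-y_{ikj})$ for all $i<j$ and $(i,k)\in E_s$ with $k\neq j$; - $\sum_{k\neq j:(i,k)\in E_s}y_{ikj}=1-x_{ij}$ for all $(i,j)\in E_s$, $i<j$; - $\sum_{k\neq j:(i,k)\in E_s}y_{ikj}=1$ for all $i<j$ with $(i,j)\notin E_s$; - $y_{ikj}\le x_{ik}$ for all $i<j$, $(i,k)\in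 E_s$, $k\neq j$; - $\sum_{j:(i,j)\in E_s}x_{ij}=\delta_i$ for all $i\in V$. Let $(x^*,y^*,d^* )$ be an optimal solution of F1L. Then the edges $\{(i,j)\in E_s:x^*_{ij}=1\}$ form an optimal tree, and the optimal objective value equals its communication cost $C_A$.
   Context: Variable $y_{ikj}$ is intended to equal 1 iff the shortest path from $i$ to $j$ in the tree goes through the neighbour $k$ of $i$; $d_{ij}$ is intended to be the tree distance between $i$ and $j$. *)

(* Defs.v *)
From HB Require Import structures.
From mathcomp Require Import all_boot all_order all_algebra.
Set Implicit Arguments. Unset Strict Implicit. Unset Printing Implicit Defensive.
Import Order.TTheory GRing.Theory Num.Theory.
Local Open Scope ring_scope.

Definition simple_graph n (E : rel 'I_n) : Prop :=
  (forall i j, E i j = E j i) /\ (forall i, ~~ E i i).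

Definition n_edges n (T : rel 'I_n) : nat :=
  #|[set p : 'I_n * 'I_n | (p.1 < p.2)%N && T p.1 p.2]|.

Definition spanning_tree n (E T : rel 'I_n) : Prop :=
  (forall i j, T i j -> E i j) /\ (forall i j, T i j = T j i) /\
  (forall i j, connect T i j) /\ n_edges T = (n - 1)%N.

Definition degree n (T : rel 'I_n) (i : 'I_n) : nat := #|[set j | T i j]|.

Definition admissible n (E : rel 'I_n) (delta : 'I_n -> nat) (T : rel 'I_n) : Prop :=
  spanning_tree E T /\ forall i, degree T i = delta i.

(* Number of edges of a shortest path from i to j in T (for a tree, the
   number of edges of the unique i-j path): the least k < n such that there is
   a walk i = v0, v1, ..., vk = j along edges of T; n if none exists. *)
Definition dist n (T : rel 'I_n) (i j : 'I_n) : nat :=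
  find (fun k => [exists p : k.-tuple 'I_n, path T i p && (last i p == j)])
       (iota 0 n).

Definition comm_cost (R : numDomainType) n (mu : 'I_n -> 'I_n -> R)
  (T : rel 'I_n) : R :=
  \sum_(i : 'I_n) \sum_(j : 'I_n | j != i) mu i j * (dist T i j)%:R.

(* Feasibility for the MILP F1L; x, y are binary (bool), d is integer-valued
   in {1,...,L}. Only the entries indexed as in the paper are constrained. *)
Definition F1L_feasible (R : numDomainType) n (E : rel 'I_n)
  (delta : 'I_n -> nat) (L : nat) (M : R)
  (x : 'I_n -> 'I_n -> bool) (y : 'I_n -> 'I_n -> 'I_n -> bool)
  (d : 'I_n -> 'I_n -> nat) : Prop :=
  (forall i j, E i j -> x i j = x j i) /\
  (forall i j, i != j -> d i j = d j i /\ (1 <= d i j <= L)%N) /\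
  (forall i j k : 'I_n, (i < j)%N -> E i k -> k != j ->
     (d i j)%:R >= (d k j)%:R + 1 - M * (1 - (y i k j)%:R)) /\
  (forall i j : 'I_n, (i < j)%N -> E i j ->
     (\sum_(k : 'I_n | E i k && (k != j)) (y i k j : nat))%N = (1 - x i j)%N) /\
  (forall i j : 'I_n, (i < j)%N -> ~~ E i j ->
     (\sum_(k : 'I_n | E i k && (k != j)) (y i k j : nat))%N = 1%N) /\
  (forall i j k : 'I_n, (i < j)%N -> E i k -> k != j -> y i k j ==> x i k) /\
  (forall i, (\sum_(j : 'I_n | E i j) (x i j : nat))%N = delta i).

Definition F1L_obj (R : numDomainType) n (mu : 'I_n -> 'I_n -> R)
  (d : 'I_n -> 'I_n -> nat) : R :=
  \sum_(i : 'I_n) \sum_(j : 'I_n | j != i) mu i j * (d i j)%:R.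

Definition selected n (E : rel 'I_n) (x : 'I_n -> 'I_n -> bool) : rel 'I_n :=
  fun i j => E i j && x i j.

(* Main.v *)
Require Import Defs.
From HB Require Import structures.
From mathcomp Require Import all_boot all_order all_algebra.
From mathcomp Require Import lra.
Import Order.TTheory GRing.Theory Num.Theory.

Module Helpers1.
Set Implicit Arguments. Unset Strict Implicit. Unset Printing Implicit Defensive.

Section Walks.
Variables (n : nat) (T : rel 'I_n).

Definition walk (a b : 'I_n) (k : nat) :=
  exists p : seq 'I_n, [/\ size p = k, path T a p & last a p = b].

Lemma walk0 a b : walk a b 0 -> a = b.
Proof. by case=> [[|? ?] [//= _ _ ->]]. Qed.

Lemma walk1 a b : walk a b 1 -> T a b.
Proof. by case=> [[|c [|? ?]] [//= _]]; rewrite andbT => ? <-. Qed.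

Lemma walk_cons a c b k : T a c -> walk c b k -> walk a b k.+1.
Proof. by move=> Tac [p [sp pp lp]]; exists (c :: p); rewrite /= Tac sp. Qed.

Lemma walk_uncons a b k : walk a b k.+1 -> exists c, T a c /\ walk c b k.
Proof.
by case=> [[|c p] [//= [sp] /andP[Tac pp] lp]]; exists c; split=> //; exists p.
Qed.

Lemma walk_rev (Tsym : forall i j, T i j = T j i) a b k : walk a b k -> walk b a k.
Proof.
case=> p [sp pp lp]; case/lastP: p sp pp lp => [|q c] sp pp lp.
  by move: sp lp => /= <- ->; exists [::].
exists (rev (belast a (rcons q c))); split.
- by rewrite size_rev size_belast.
- rewrite -lp rev_path; apply: etrans pp; apply: eq_path => u v; exact: Tsym.
- by rewrite belast_rcons rev_cons last_rcons.
Qed.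

Lemma dist_size a b : (dist T a b <= n)%N.
Proof. by rewrite /dist (leq_trans (find_size _ _)) // size_iota. Qed.

Lemma dist_le a b k : walk a b k -> (dist T a b <= k)%N.
Proof.
move=> [p [sp pp lp]].
case: (ltnP k n) => hk; last exact: leq_trans (dist_size a b) hk.
rewrite leqNgt; apply/negP => /(before_find 0).
rewrite nth_iota // add0n => /existsP; apply.
have Hs : size p == k by rewrite sp.
by exists (Tuple Hs); rewrite /= pp lp eqxx.
Qed.

Lemma dist_walk a b : (dist T a b < n)%N -> walk a b (dist T a b).
Proof.
move=> h.
have hh : has (fun k => [exists p : k.-tuple 'I_n, path T a p && (last a p == b)])
  (iota 0 n) by rewrite has_find size_iota.
move: (nth_find 0 hh); rewrite -/(dist T a b) nth_iota // add0n.
by case/existsP=> p /andP[pp /eqP lp]; exists p; rewrite size_tuple.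
Qed.

Lemma dist_sym (Tsym : forall i j, T i j = T j i) a b : dist T a b = dist T b a.
Proof.
have H u v : (dist T u v <= dist T v u)%N.
  case: (ltnP (dist T v u) n) => h.
    by apply: dist_le; apply: walk_rev => //; apply: dist_walk.
  exact: leq_trans (dist_size _ _) h.
by apply/eqP; rewrite eqn_leq !H.
Qed.

Lemma connect_dist a b : connect T a b -> (dist T a b < n)%N.
Proof.
case/connectP=> p pp ->.
case: (shortenP pp) => p' pp' up' _.
have hc := card_uniqP up'.
apply: leq_ltn_trans (dist_le (k := size p') _) _; first by exists p'.
by have := max_card (mem (a :: p')); rewrite hc card_ord.
Qed.

End Walks.

Section Deg.
Variables (n : nat) (T : rel 'I_n).

Lemma degreeE i : degree T i = (\sum_j (T i j : nat))%N.
Proof.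
rewrite /degree -sum1_card big_mkcond /=; apply: eq_bigr => j _.
by rewrite inE; case: (T i j).
Qed.

Lemma n_edgesE : n_edges T = (\sum_(i : 'I_n) \sum_(j : 'I_n) ((i < j)%N && T i j : nat))%N.
Proof.
rewrite /n_edges -sum1_card big_mkcond pair_big /=; apply: eq_bigr => -[i j] _.
by rewrite inE /=; case: ifP.
Qed.

Lemma sum_degree (Tsym : forall i j, T i j = T j i) (Tirr : forall i, ~~ T i i) :
  (\sum_i degree T i = 2 * n_edges T)%N.
Proof.
rewrite n_edgesE mul2n -addnn.
have -> : (\sum_i degree T i = \sum_(i : 'I_n) \sum_(j : 'I_n) ((i < j)%N && T i j : nat)
     + \sum_(i : 'I_n) \sum_(j : 'I_n) ((j < i)%N && T i j : nat))%N.
  rewrite -big_split /=; apply: eq_bigr => i _; rewrite degreeE -big_split /=.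
  apply: eq_bigr => j _; case: (ltngtP i j) => h /=.
  - by rewrite addn0.
  - by rewrite add0n.
  - have -> : i = j by apply: val_inj.
    by rewrite (negbTE (Tirr j)).
congr (_ + _)%N; rewrite exchange_big /=; apply: eq_bigr => i _.
by apply: eq_bigr => j _; rewrite Tsym.
Qed.

Lemma dist_bound (Tsym : forall i j, T i j = T j i)
  (Tconn : forall i j, connect T i j) i j : i != j ->
  (dist T i j <= #|[set v | (1 < degree T v)%N]| + 1)%N.
Proof.
move=> ij; have /connectP[p pp lp] := Tconn i j.
move: lp ij; case: (shortenP pp) => p' pp' up' _ -> ij.
case/lastP: p' pp' up' ij => [|q c] pp' up' ij; first by rewrite eqxx in ij.
apply: leq_trans (dist_le (k := (size q).+1) _) _.
  by exists (rcons q c); rewrite size_rcons.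
rewrite addn1 ltnS.
have uq : uniq q by move: up'; rewrite /= rcons_uniq => /andP[_ /andP[_]].
rewrite -(card_uniqP uq); apply: subset_leq_card; apply/subsetP => v vq.
rewrite inE; case/splitPr: vq pp' up' => q1 q2 pp' up'.
move: pp' up'; rewrite rcons_cat rcons_cons cat_path => /andP[_ /= /andP[Tuv pv]].
case/andP=> iq; rewrite cat_uniq => /and3P[_ hn _].
have [w [Tvw wq]] : exists w, T v w /\ w \in rcons q2 c.
  case: q2 pv {iq hn} => [|w q2] /=.
    by rewrite andbT => Tvc; exists c; rewrite mem_seq1.
  by case/andP=> Tvw _; exists w; rewrite mem_head.
have uw : last i q1 != w.
  apply/eqP=> ew; have := mem_last i q1; rewrite ew in_cons => /orP[/eqP wi|wq1].
    by move: iq; rewrite -wi mem_cat in_cons wq !orbT.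
  by move/hasPn: hn => /(_ w); rewrite in_cons wq orbT wq1 => /(_ isT).
rewrite /degree; apply: leq_trans (subset_leq_card (A := [set last i q1; w]) _).
  by rewrite cards2 uw.
apply/subsetP => z; rewrite !inE => /orP[] /eqP ->; last by [].
by rewrite Tsym.
Qed.

End Deg.

End Helpers1.
Import Helpers1.

Local Open Scope ring_scope.

Module Helpers2.
Set Implicit Arguments. Unset Strict Implicit. Unset Printing Implicit Defensive.

Section Chain.
Variables (R : realFieldType) (n : nat) (E : rel 'I_n) (delta : 'I_n -> nat)
  (L : nat) (M : R) (x : 'I_n -> 'I_n -> bool) (y : 'I_n -> 'I_n -> 'I_n -> bool)
  (d : 'I_n -> 'I_n -> nat).
Hypothesis Esym : forall i j, E i j = E j i.
Hypothesis feas : F1L_feasible E delta L M x y d.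

Lemma S_sym i j : selected E x i j = selected E x j i.
Proof.
case: feas => xs _; rewrite /selected Esym.
by case Eji: (E j i) => //=; rewrite xs // Esym.
Qed.

Lemma chain a b : a != b -> exists k, (k <= d a b)%N /\ walk (selected E x) a b k.
Proof.
have [xs [dd [bigM [s1 [s2 [yx _]]]]]] := feas.
suff H : forall N (a b : 'I_n), a != b -> (d a b <= N)%N ->
  exists k, (k <= d a b)%N /\ walk (selected E x) a b k.
  by move=> ab; exact: H _ a b ab (leqnn _).
elim=> [|N IH] {}a {}b ab hN.
  by case: (dd a b ab) => _ /andP[h _]; move: (leq_trans h hN).
have H1 : forall a b : 'I_n, (a < b)%N -> (d a b <= N.+1)%N ->
    exists k, (k <= d a b)%N /\ walk (selected E x) a b k.
  move=> a' b' lab hN'.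
  have ab' : a' != b' by rewrite neq_ltn lab.
  case Eab : (E a' b' && x a' b').
    exists 1%N; split; first by case: (dd a' b' ab') => _ /andP[].
    by exists [:: b']; rewrite /= /selected Eab.
  have hs : (\sum_(k | E a' k && (k != b')) (y a' k b' : nat))%N = 1%N.
    case E1 : (E a' b'); last by apply: s2 => //; rewrite E1.
    by rewrite s1 //; move: Eab; rewrite E1 /= => ->.
  case: (pickP (fun k => E a' k && (k != b') && y a' k b')) =>
      [k /andP[/andP[Eak kb] yk] | none]; last first.
    move: hs; rewrite big1 // => k /andP[Eak kb].
    by have := none k; rewrite Eak kb /= => ->.
  have Sak : selected E x a' k.
    by rewrite /selected Eak (implyP (yx _ _ _ lab Eak kb) yk).
  have hlt : (d k b' < d a' b')%N.
    have := bigM a' b' k lab Eak kb; rewrite yk /= mulr1n subrr mulr0 subr0.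
    by rewrite -[1]/(1%:R) -natrD ler_nat addn1.
  have [k' [hk' wk]] := IH k b' kb (leq_trans hlt hN').
  by exists k'.+1; split; [exact: leq_ltn_trans hk' hlt | exact: walk_cons Sak wk].
case: (ltngtP a b) => h; first exact: H1.
  case: (dd a b ab) => e _; rewrite e in hN *.
  have [k [hk w]] := H1 b a h hN; exists k; split => //.
  by apply: walk_rev w => i j; apply: S_sym.
by move: ab; rewrite (val_inj h) eqxx.
Qed.

End Chain.

Definition nh n (T : rel 'I_n) (i j : 'I_n) :=
  [pick k | T i k && (k != j) && (dist T k j < dist T i j)%N].
Definition ytree n (T : rel 'I_n) (i k j : 'I_n) : bool :=
  ~~ T i j && (Some k == nh T i j).

Section Feas.
Variables (n : nat) (T : rel 'I_n).
Hypothesis Tsym : forall i j, T i j = T j i.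
Hypothesis Tconn : forall i j, connect T i j.

Lemma dist_pos i j : i != j -> (0 < dist T i j)%N.
Proof.
move=> ij; rewrite lt0n; apply/eqP => h.
have := dist_walk (connect_dist (Tconn i j)); rewrite h => /walk0 e.
by rewrite e eqxx in ij.
Qed.

Lemma nh_spec i j : i != j -> ~~ T i j ->
  exists k, [/\ nh T i j = Some k, T i k, k != j & (dist T k j < dist T i j)%N].
Proof.
move=> ij nT; rewrite /nh; case: pickP => [k /andP[/andP[Tik kj] hk] | none].
  by exists k.
exfalso; move: (dist_walk (connect_dist (Tconn i j))) (none).
case E0: (dist T i j) => [|[|D]] w none'.
- by move/walk0: w => e; rewrite e eqxx in ij.
- by move/walk1: w; rewrite (negbTE nT).
- case/walk_uncons: w => c [Tic wc].
  have cj : c != j.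
    apply/eqP=> e; subst c.
    have : (dist T i j <= 1)%N.
      apply: dist_le; apply: walk_cons Tic _; by exists [::].
    by rewrite E0.
  by have := none' c; rewrite Tic cj /= ltnS (dist_le wc).
Qed.

Lemma sum_ytree (P : pred 'I_n) i j : i != j -> ~~ T i j ->
  (forall k, T i k -> P k) ->
  (\sum_(k | P k && (k != j)) (ytree T i k j : nat))%N = 1%N.
Proof.
move=> ij nT hP; have [k0 [e Tik0 k0j _]] := nh_spec ij nT.
rewrite (bigD1 k0) /=; last by rewrite hP.
rewrite /ytree nT /= [nh _ _ _]e eqxx big1 // => k /andP[_ kk0].
by case: eqP => // -[ek]; rewrite ek eqxx in kk0.
Qed.

Lemma ytree_T i k j : ytree T i k j -> T i k.
Proof.
rewrite /ytree => /andP[nT /eqP e].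
case: (eqVneq i j) => [ij|ij]; first by move: e; rewrite /nh; case: pickP => // k' /andP[/andP[? _] _] [->].
by have [k0 [e' Tik0 _ _]] := nh_spec ij nT; move: e; rewrite e' => -[->].
Qed.

Lemma ytree_lt i k j : ytree T i k j -> (dist T k j < dist T i j)%N.
Proof.
rewrite /ytree => /andP[nT /eqP e]; move: e; rewrite /nh.
by case: pickP => // k' /andP[_ h] [->].
Qed.

End Feas.

Lemma feasible_of_tree (R : realFieldType) n (E : rel 'I_n) (delta : 'I_n -> nat)
  (M : R) (T : rel 'I_n) :
  admissible E delta T ->
  let L := (#|[set i : 'I_n | (1 < delta i)%N]| + 2)%N in
  L%:R <= M ->
  F1L_feasible E delta L M (fun i j => T i j) (ytree T) (dist T).
Proof.
move=> [[TE [Tsym [Tconn _]]] Tdeg] L hLM.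
have dL : forall i j, i != j -> (dist T i j <= L)%N.
  move=> i j ij; apply: leq_trans (dist_bound Tsym Tconn ij) _.
  suff -> : #|[set v | (1 < degree T v)%N]| = #|[set v | (1 < delta v)%N]|.
    by rewrite /L leq_add2l.
  by apply: eq_card => v; rewrite !inE Tdeg.
split; first by move=> i j _; apply: Tsym.
split.
  move=> i j ij; split; first exact: dist_sym.
  by rewrite dist_pos // dL.
split.
  move=> i j k lij Eik kj.
  have ij : i != j by rewrite neq_ltn lij.
  have h1 : 1 <= (dist T i j)%:R :> R by rewrite ler1n dist_pos.
  case yk: (ytree T i k j) => /=.
    have : ((dist T k j).+1 <= dist T i j)%N := ytree_lt yk.
    rewrite -(ler_nat R) -addn1 natrD => h.
    by rewrite subrr mulr0 subr0.
  have h2 : (dist T k j)%:R <= L%:R :> R by rewrite ler_nat dL.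
  lra.
split.
  move=> i j lij Eij; have ij : i != j by rewrite neq_ltn lij.
  case Tij: (T i j) => /=.
    by rewrite big1 // => k _; rewrite /ytree Tij.
  by rewrite sum_ytree // ?Tij // => k /TE.
split.
  move=> i j lij nE; have ij : i != j by rewrite neq_ltn lij.
  rewrite sum_ytree // => [|k /TE //].
  by apply/negP => /TE; apply/negP.
split.
  by move=> i j k _ _ _; apply/implyP => /ytree_T; apply.
move=> i; rewrite -Tdeg degreeE big_mkcond /=; apply: eq_bigr => j _.
by case: ifP => // /negbT nE; case Tij: (T i j) => //; move: nE; rewrite TE.
Qed.

End Helpers2.
Import Helpers2.

Theorem proposition3 (R : realFieldType) (n : nat) (E : rel 'I_n)
  (mu : 'I_n -> 'I_n -> R) (delta : 'I_n -> nat) (M : R)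
  (x : 'I_n -> 'I_n -> bool) (y : 'I_n -> 'I_n -> 'I_n -> bool)
  (d : 'I_n -> 'I_n -> nat) :
  (1 < n)%N ->
  simple_graph E ->
  (forall i j, i != j -> mu i j = mu j i) ->
  (forall i j, i != j -> 0 <= mu i j) ->
  (forall i, (0 < delta i)%N) ->
  (\sum_(i : 'I_n) delta i)%N = (2 * (n - 1))%N ->
  (exists T : rel 'I_n, admissible E delta T) ->
  let L := (#|[set i : 'I_n | (1 < delta i)%N]| + 2)%N in
  L%:R <= M ->
  F1L_feasible E delta L M x y d ->
  (forall x' y' d', F1L_feasible E delta L M x' y' d' ->
     F1L_obj mu d <= F1L_obj mu d') ->
  admissible E delta (selected E x) /\
  (forall T : rel 'I_n, admissible E delta T ->
     comm_cost mu (selected E x) <= comm_cost mu T) /\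
  F1L_obj mu d = comm_cost mu (selected E x).
Proof.
move=> _ [Esym Eirr] _ mu0 _ hsum _ L hLM feas opt.
have [xs [dd [_ [_ [_ [_ degx]]]]]] := feas.
set S := selected E x.
have Ssym : forall i j, S i j = S j i by move=> i j; exact: (S_sym Esym feas i j).
have Sirr : forall i, ~~ S i i by move=> i; rewrite /S /selected (negbTE (Eirr i)).
have Sdeg : forall i, degree S i = delta i.
  move=> i; rewrite -degx degreeE [RHS]big_mkcond /=; apply: eq_bigr => j _.
  by rewrite /S /selected; case: (E i j).
have Sconn : forall i j, connect S i j.
  move=> i j; case: (eqVneq i j) => [->|ij]; first exact: connect0.
  have [k [_ [p [_ pp lp]]]] := chain Esym feas ij.
  by apply/connectP; exists p.
have Sadm : admissible E delta S.
  split=> //; split; first by move=> i j /andP[].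
  split=> //; split=> //.
  have := sum_degree Ssym Sirr; rewrite (eq_bigr _ (fun i _ => Sdeg i)) hsum.
  by move/eqP; rewrite eqn_mul2l /= => /eqP.
have ge : comm_cost mu S <= F1L_obj mu d.
  apply: ler_sum => i _; apply: ler_sum => j ji.
  have ij : i != j by rewrite eq_sym.
  apply: ler_wpM2l; first exact: mu0.
  rewrite ler_nat; have [k [hk w]] := chain Esym feas ij.
  exact: leq_trans (dist_le w) hk.
have le : forall T, admissible E delta T -> F1L_obj mu d <= comm_cost mu T.
  by move=> T hT; apply: (opt _ _ _ (feasible_of_tree hT hLM)).
split=> //; split.
  by move=> T hT; apply: le_trans ge (le T hT).
by apply/eqP; rewrite eq_le ge le.
Qed.
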